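(* Let $\mathcal{X}$ be a finite set of locations with metric $d$, let $\pi$ be a prior distribution on $\mathcal{X}$ with $\pi(x)>0$ for all $x$, let $\{\Phi_k\}$ be a partition of $\mathcal{X}$ into nonempty disjoint sets, and let $\epsilon_k\ge0$. Let $f(\cdot\mid\cdot)$ be an obfuscation mechanism with $f(x'\mid x)\le e^{\epsilon_k}f(x'\mid y)$ for all $x,y\in\Phi_k$, all $x'\in\mathcal{X}$ and all $k$. Then for every $x'\in\mathcal{X}$ with $\Pr(x')>0$, $$ExpEr(x')\ \ge\ \sum_k \Pr(\Phi_k\mid x')\,e^{-\epsilon_k}\,E'(\Phi_k),$$ where $\Pr(\Phi_k\mid x')=\sum_{y\in\Phi_k}\Pr(y\mid x')$ (and these satisfy $\sum_k\Pr(\Phi_k\mid x')=1$).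
   Context: An obfuscation mechanism is a family of probability distributions $f(\cdot\mid x)$ on $\mathcal{X}$, one for each true location $x\in\mathcal{X}$; $f(x'\mid x)$ is the probability of reporting pseudo-location $x'$ when the true location is $x$. Define $\Pr(x')=\sum_{x\in\mathcal{X}}\pi(x)f(x'\mid x)$ and, when $\Pr(x')>0$, the posterior $\Pr(x\mid x')=\pi(x)f(x'\mid x)/\Pr(x')$. The conditional expected inference error is $$ExpEr(x')=\min_{\hat{x}\in\mathcal{X}}\sum_{x\in\mathcal{X}}\Pr(x\mid x')\,d(\hat{x},x).$$ For a nonempty $\Phi\subseteq\mathcal{X}$, define $$E'(\Phi)=\min_{\hat{x}\in\mathcal{X}}\sum_{x\in\Phi}\frac{\pi(x)}{\sum_{y\in\Phi}\pi(y)}\,d(\hat{x},x).$$ *)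

(* Defs.v *)
From mathcomp Require Import all_boot all_order all_algebra.
From mathcomp Require Import all_classical all_reals all_analysis.
Set Implicit Arguments. Unset Strict Implicit. Unset Printing Implicit Defensive.
Import Order.TTheory GRing.Theory Num.Theory.
Local Open Scope ring_scope.

Section Defs.
Variables (R : realType) (X : finType).

(* minimum over the (nonempty) finite type X of F, witness x0 only ensures nonemptiness *)
Definition minX (x0 : X) (F : X -> R) : R := F [arg min_(i < x0) F i]%O.

Definition is_metric (d : X -> X -> R) : Prop :=
  (forall x y, 0 <= d x y) /\ (forall x y, d x y = 0 <-> x = y) /\
  (forall x y, d x y = d y x) /\ (forall x y z, d x z <= d x y + d y z).

Definition is_distr (p : X -> R) : Prop :=
  (forall x, 0 <= p x) /\ \sum_(x : X) p x = 1.

(* f x' x = probability of reporting x' given true location x *)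
Definition is_mechanism (f : X -> X -> R) : Prop :=
  forall x, is_distr (fun x' => f x' x).

Definition Prx (pi : X -> R) (f : X -> X -> R) (x' : X) : R :=
  \sum_(x : X) pi x * f x' x.

Definition posterior (pi : X -> R) (f : X -> X -> R) (x' x : X) : R :=
  pi x * f x' x / Prx pi f x'.

Definition ExpEr (d : X -> X -> R) (pi : X -> R) (f : X -> X -> R) (x' : X) : R :=
  minX x' (fun xh => \sum_(x : X) posterior pi f x' x * d xh x).

Definition Eprime (d : X -> X -> R) (pi : X -> R) (x0 : X) (Phi : {set X}) : R :=
  minX x0 (fun xh => \sum_(x in Phi) pi x / (\sum_(y in Phi) pi y) * d xh x).

Definition PrPhi (pi : X -> R) (f : X -> X -> R) (x' : X) (Phi : {set X}) : R :=
  \sum_(y in Phi) posterior pi f x' y.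

End Defs.

(* Main.v *)
Require Import Defs.
From mathcomp Require Import all_boot all_order all_algebra.
From mathcomp Require Import all_classical all_reals all_analysis.
From mathcomp Require Import ring.
Import Order.TTheory GRing.Theory Num.Theory.
Local Open Scope ring_scope.

Lemma minX_le {R : realType} {X : finType} (x0 : X) (F : X -> R) y :
  minX x0 F <= F y.
Proof. rewrite /minX; case: arg_minP => // i _ H; exact: H. Qed.

Theorem mainTheorem2 (R : realType) (X : finType) (d : X -> X -> R)
  (pi : X -> R) (K : finType) (Phi : K -> {set X}) (eps : K -> R)
  (f : X -> X -> R) :
  is_metric d ->
  is_distr pi -> (forall x, 0 < pi x) ->
  (forall k, (0 < #|Phi k|)%N) ->
  (forall k l, k != l -> [disjoint Phi k & Phi l]) ->
  (forall x, exists k, x \in Phi k) ->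
  (forall k, 0 <= eps k) ->
  is_mechanism f ->
  (forall k x y x', x \in Phi k -> y \in Phi k -> f x' x <= expR (eps k) * f x' y) ->
  forall x', 0 < Prx pi f x' ->
    \sum_(k : K) PrPhi pi f x' (Phi k) * expR (- eps k) * Eprime d pi x' (Phi k)
      <= ExpEr d pi f x'.
Proof.
move=> [d0 _] _ pi0 ne disj cov _ mech hf x' P0.
have f0 : forall a b, 0 <= f a b by move=> a b; case: (mech b).
rewrite /ExpEr /minX; set xh := Order.arg_min _ _ _.
set G := fun x => posterior pi f x' x * d xh x.
have -> : \sum_(x : X) posterior pi f x' x * d xh x = \sum_k \sum_(x in Phi k) G x.
  rewrite (eq_bigr (fun x => \sum_k (if x \in Phi k then G x else 0))).
    rewrite [LHS]exchange_big /=; apply: eq_bigr => k _; by rewrite [RHS]big_mkcond.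
  move=> x _; have [k0 hk0] := cov x.
  rewrite (bigD1 k0) //= hk0 big1 ?addr0 // => k hk.
  have := disj _ _ hk; rewrite disjoint_sym => /disjointFr -> //.
apply: ler_sum => k _.
set S := \sum_(y in Phi k) pi y.
have S0 : 0 < S.
  have [y hy] : exists y, y \in Phi k by apply/card_gt0P; exact: ne.
  rewrite /S (bigD1 y) //= ltr_pwDl ?pi0 //; apply: sumr_ge0 => i _; exact: ltW.
set A := \sum_(y in Phi k) pi y * f x' y.
set B := \sum_(x in Phi k) pi x * d xh x.
set e := expR (- eps k).
have e0 : 0 <= e by exact: expR_ge0.
have hPr : PrPhi pi f x' (Phi k) = A / Prx pi f x'.
  by rewrite /PrPhi /posterior /A mulr_suml.
have hE : Eprime d pi x' (Phi k) <= B / S.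
  rewrite /Eprime; have H := minX_le x' (fun xh0 => \sum_(x in Phi k) pi x / (\sum_(y in Phi k) pi y) * d xh0 x) xh. apply: le_trans H _.
  rewrite /B mulr_suml; apply: ler_sum => x _; rewrite /S; rewrite le_eqVlt; apply/orP; left; apply/eqP; field.
  by rewrite gt_eqF.
have A0 : 0 <= A by apply: sumr_ge0 => i _; rewrite mulr_ge0 ?f0 // ltW.
have hfx : forall x, x \in Phi k -> e * A / S <= f x' x.
  move=> x hx; rewrite ler_pdivrMr //.
  rewrite /A /S mulr_sumr mulr_sumr; apply: ler_sum => y hy.
  have := hf k y x x' hy hx => h.
  have : e * f x' y <= e * (expR (eps k) * f x' x) by rewrite ler_wpM2l.
  rewrite mulrA /e -expRD addNr expR0 mul1r => h2.
  rewrite mulrA (mulrC e) -mulrA mulrC; apply: le_trans (_ : pi y * (e * f x' y) <= _).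
    by rewrite mulrC.
  by rewrite (mulrC (f x' x)); apply: ler_wpM2l; [exact: ltW|].
rewrite hPr.
apply: le_trans (_ : A / Prx pi f x' * e * (B / S) <= _).
  apply: ler_wpM2l => //; apply: mulr_ge0 => //; apply: divr_ge0 => //; exact: ltW.
have -> : A / Prx pi f x' * e * (B / S) = (\sum_(x in Phi k) pi x * d xh x * (e * A / S)) / Prx pi f x'.
  rewrite -mulr_suml -/B; field; by rewrite !gt_eqF.
apply: le_trans (_ : \sum_(x in Phi k) pi x * d xh x * (e * A / S) / Prx pi f x' <= _).
  by rewrite mulr_suml.
apply: ler_sum => x hx; rewrite /G /posterior.
have -> : pi x * f x' x / Prx pi f x' * d xh x = pi x * d xh x * f x' x / Prx pi f x'.
  by field; rewrite gt_eqF.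
apply: ler_wpM2r; first by rewrite invr_ge0 ltW.
apply: ler_wpM2l; first by rewrite mulr_ge0 ?d0 // ltW.
exact: hfx.
Qed.
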